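(* In the setting of an iteration $t$ of the NSGA-II optimizing \textsc{OneMinMax}, with crowding distances computed with respect to $R_t$, let $v_1^{\min},v_1^{\max}$, $V$, $V^+_{\mathrm{in}}$, $V^-_{\mathrm{in}}$ be as defined below and assume $v_1^{\max}>v_1^{\min}$. Then for every $(v_1,v_2)\in V^+_{\mathrm{in}}\cap V^-_{\mathrm{in}}$, there are at most two individuals $x\in R_t$ with $f(x)=(v_1,v_2)$ and $\mathrm{cDis}(x)\ge\frac{2}{v_1^{\max}-v_1^{\min}}$ (regardless of how ties are broken in the sorting steps).
   Context: Search space $\{0,1\}^n$; objective $f=(f_1,f_2)$, both maximized. Populations are multisets of bit strings. Crowding distance of the individuals of a set $S$ (computed with respect to $S$): start with $\mathrm{cDis}(x)=0$ for all $x\in S$; for each $i\in\{1,2\}$, sort $S$ in ascending $f_i$-value as $S_{i.1},\dots,S_{i.|S|}$ (ties broken arbitrarily), set $\mathrm{cDis}(S_{i.1})=\mathrm{cDis}(S_{i.|S|})=+\infty$, and for $2\le j\le |S|-1$ add $\frac{f_i(S_{i.j+1})-f_i(S_{i.j-1})}{f_i(S_{i.|S|})-f_i(S_{i.1})}$ to $\mathrm{cDis}(S_{i.j})$. In the NSGA-II, $R_t=P_t\cup Q_t$ is the multiset union of the parent population $P_t$ and offspring population $Q_t$ of iteration $t$, each of size $N$. \textsc{OneMinMax}: $f(x)=(n-\sum_i x_i,\ \sum_i x_i)$. Notation: $v_1^{\min}=\min\{f_1(x):x\in R_t\}$, $v_1^{\max}=\max\{f_1(x):x\in R_t\}$, $V=f(R_t)=\{f(x):x\in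 R_t\}$, $V^+_{\mathrm{in}}=\{(v_1,v_2)\in V:\exists y\in R_t,\ f(y)=(v_1+1,v_2-1)\}$, $V^-_{\mathrm{in}}=\{(v_1,v_2)\in V:\exists y\in R_t,\ f(y)=(v_1-1,v_2+1)\}$. *)

(* Defs.v *)
From mathcomp Require Import all_boot all_order all_fingroup all_algebra.
Set Implicit Arguments. Unset Strict Implicit. Unset Printing Implicit Defensive.
Import Order.TTheory GRing.Theory Num.Theory.

Definition bitstr (n : nat) := n.-tuple bool.
Definition bs0 (n : nat) : bitstr n := [tuple of nseq n false].

Definition ones n (x : bitstr n) : nat := count id x.

Definition fobj n (i : 'I_2) (x : bitstr n) : nat :=
  if val i == 0%N then (n - ones x)%N else ones x.
Definition f1 n (x : bitstr n) : nat := fobj ord0 x.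
Definition f2 n (x : bitstr n) : nat := fobj ord_max x.

(* The k-th individual of the multiset R (given as a sequence). *)
Definition ind n (R : seq (bitstr n)) (k : nat) : bitstr n := nth (bs0 n) R k.

(* A tie-breaking choice of sortings: for each objective i, a permutation s i of
   the positions of R such that j |-> f_i(R_(s i j)) is nondecreasing,
   i.e. S_{i.j+1} = R_(s i j). *)
Definition sorting n (R : seq (bitstr n)) (s : 'I_2 -> {perm 'I_(size R)}) : Prop :=
  forall (i : 'I_2) (j1 j2 : 'I_(size R)), (j1 <= j2)%N ->
    (fobj i (ind R (s i j1)) <= fobj i (ind R (s i j2)))%N.

(* f_i-values along the i-th sorted order, indexed from 0 *)
Definition sval n (R : seq (bitstr n)) (s : 'I_2 -> {perm 'I_(size R)})
  (i : 'I_2) (p : nat) : rat :=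
  (nth 0%N [seq fobj i (ind R (s i j)) | j <- enum 'I_(size R)] p)%:R%R.

(* Contribution of objective i to the crowding distance of the individual at
   position k of R; None stands for +infinity. *)
Definition cdis_part n (R : seq (bitstr n)) (s : 'I_2 -> {perm 'I_(size R)})
  (i : 'I_2) (k : 'I_(size R)) : option rat :=
  let p := val ((s i)^-1 k)%g in
  let m := size R in
  if (p == 0%N) || (p == m.-1) then None
  else Some ((sval s i p.+1 - sval s i p.-1) / (sval s i m.-1 - sval s i 0))%R.

Definition cDis n (R : seq (bitstr n)) (s : 'I_2 -> {perm 'I_(size R)})
  (k : 'I_(size R)) : option rat :=
  match cdis_part s ord0 k, cdis_part s ord_max k with
  | Some a, Some b => Some (a + b)%R
  | _, _ => None
  end.

Definition ge_ext (c : option rat) (t : rat) : bool :=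
  if c is Some a then (t <= a)%R else true.

(* v_1^min, v_1^max over R (R nonempty in the statement; n is an upper bound of f_1) *)
Definition v1min n (R : seq (bitstr n)) : nat := \big[minn/n]_(x <- R) f1 x.
Definition v1max n (R : seq (bitstr n)) : nat := \max_(x <- R) f1 x.

Definition inV n (R : seq (bitstr n)) (v1 v2 : nat) : Prop :=
  exists2 x, x \in R & (f1 x = v1 /\ f2 x = v2).
Definition inVplus n (R : seq (bitstr n)) (v1 v2 : nat) : Prop :=
  inV R v1 v2 /\ exists2 y, y \in R & (f1 y = v1.+1 /\ (f2 y).+1 = v2).
Definition inVminus n (R : seq (bitstr n)) (v1 v2 : nat) : Prop :=
  inV R v1 v2 /\ exists2 y, y \in R & ((f1 y).+1 = v1 /\ f2 y = v2.+1).

(* Main.v *)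
Require Import Defs.
From mathcomp Require Import all_boot all_order all_fingroup all_algebra.
From mathcomp Require Import zify.
Import Order.TTheory GRing.Theory Num.Theory.
Set Implicit Arguments. Unset Strict Implicit. Unset Printing Implicit Defensive.

Definition hv n (R : seq (bitstr n)) (s : 'I_2 -> {perm 'I_(size R)}) (i : 'I_2) (p : nat) : nat :=
  nth 0%N [seq fobj i (ind R (s i j)) | j <- enum 'I_(size R)] p.

Lemma sval_hv n (R : seq (bitstr n)) (s : 'I_2 -> {perm 'I_(size R)}) (i : 'I_2) p : Defs.sval s i p = (hv s i p)%:R%R.
Proof. by []. Qed.

Lemma hv_ord n (R : seq (bitstr n)) (s : 'I_2 -> {perm 'I_(size R)}) (i : 'I_2) (j : 'I_(size R)) : hv s i j = fobj i (ind R (s i j)).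
Proof.
rewrite /hv (nth_map j); last by rewrite size_enum_ord.
by congr (fobj i (ind R (s i _))); apply: val_inj; rewrite /= nth_enum_ord.
Qed.

Lemma hv_mono n (R : seq (bitstr n)) (s : 'I_2 -> {perm 'I_(size R)}) (i : 'I_2) : sorting s ->
  forall a b, (a <= b)%N -> (b < size R)%N -> (hv s i a <= hv s i b)%N.
Proof.
move=> so a b ab bm.
have am : (a < size R)%N by apply: leq_ltn_trans ab bm.
have := so i (Ordinal am) (Ordinal bm) ab.
by rewrite -!(hv_ord s i (Ordinal _)).
Qed.

Lemma hv_pos n (R : seq (bitstr n)) (s : 'I_2 -> {perm 'I_(size R)}) (i : 'I_2) (k : 'I_(size R)) :
  hv s i (val ((s i)^-1 k)%g) = fobj i (ind R k).
Proof. by rewrite hv_ord permKV. Qed.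

Lemma exists_pos n (R : seq (bitstr n)) (s : 'I_2 -> {perm 'I_(size R)}) (i : 'I_2) y : y \in R ->
  exists2 r, (r < size R)%N & hv s i r = fobj i y.
Proof.
move=> yR; have im : (index y R < size R)%N by rewrite index_mem.
exists (val ((s i)^-1 (Ordinal im))%g); first by apply: ltn_ord.
by rewrite hv_pos /ind /= nth_index.
Qed.

Lemma ones_le n (x : bitstr n) : (ones x <= n)%N.
Proof. by have := count_size id x; rewrite size_tuple. Qed.

Lemma f1E n (x : bitstr n) : f1 x = (n - ones x)%N. Proof. by []. Qed.
Lemma f2E n (x : bitstr n) : f2 x = ones x. Proof. by []. Qed.

Lemma minmem (T : Type) (f : T -> nat) d (r : seq T) :
  (\big[minn/d]_(x <- r) f x) \in d :: map f r.
Proof.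
elim: r => [|a r IH]; first by rewrite big_nil mem_head.
rewrite big_cons /minn; case: ifP => _; first by rewrite !inE eqxx orbT.
by move: IH; rewrite !inE => /orP[->|->]; rewrite ?orbT.
Qed.

Lemma maxmem (T : Type) (f : T -> nat) (r : seq T) :
  (\max_(x <- r) f x) \in 0%N :: map f r.
Proof.
elim: r => [|a r IH]; first by rewrite big_nil mem_head.
rewrite big_cons /maxn; case: ifP => _.
  by move: IH; rewrite !inE => /orP[->|->]; rewrite ?orbT.
by rewrite !inE eqxx orbT.
Qed.

Lemma xmin n (R : seq (bitstr n)) : R != [::] -> exists2 x, x \in R & (f1 x <= v1min R)%N.
Proof.
case: R => [//|a r] _; rewrite /v1min /v1max.
have := minmem (@f1 n) n (a :: r); rewrite inE => /orP[/eqP->|/mapP[x xR ->]].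
  by exists a; rewrite ?mem_head // f1E leq_subr.
by exists x.
Qed.

Lemma xmax n (R : seq (bitstr n)) : R != [::] -> exists2 x, x \in R & (v1max R <= f1 x)%N.
Proof.
case: R => [//|a r] _; rewrite /v1min /v1max.
have := maxmem (@f1 n) (a :: r); rewrite inE => /orP[/eqP->|/mapP[x xR ->]].
  by exists a; rewrite ?mem_head.
by exists x.
Qed.

Lemma uniqA (h : nat -> nat) m v p1 p2 :
  (forall a b, (a <= b)%N -> (b < m)%N -> (h a <= h b)%N) ->
  (p1 < m)%N -> (p2 < m)%N -> h p1 = v -> h p2 = v ->
  (h p1.-1 < v)%N -> (h p2.-1 < v)%N -> p1 = p2.
Proof.
move=> mono l1 l2 e1 e2 a1 a2.
case: (ltngtP p1 p2) => // H.
- have : (p1 <= p2.-1)%N by lia.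
  move/mono => /(_ ltac:(lia)); lia.
- have : (p2 <= p1.-1)%N by lia.
  move/mono => /(_ ltac:(lia)); lia.
Qed.

Lemma uniqB (h : nat -> nat) m v p1 p2 :
  (forall a b, (a <= b)%N -> (b < m)%N -> (h a <= h b)%N) ->
  (p1 < m)%N -> (p2 < m)%N -> h p1 = v -> h p2 = v ->
  (v < h p1.+1)%N -> (v < h p2.+1)%N -> p1 = p2.
Proof.
move=> mono l1 l2 e1 e2 a1 a2.
case: (ltngtP p1 p2) => // H.
- have := mono _ _ H l2; lia.
- have := mono _ _ H l1; lia.
Qed.

Lemma interior (h : nat -> nat) m v p rm rp :
  (forall a b, (a <= b)%N -> (b < m)%N -> (h a <= h b)%N) ->
  (p < m)%N -> h p = v -> (rm < m)%N -> (h rm).+1 = v -> (rp < m)%N -> h rp = v.+1 ->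
  ((0 < p)%N /\ (p < m.-1)%N) /\ ((v <= (h p.-1).+1)%N /\ (h p.-1 <= v)%N /\
      (h p.+1 <= v.+1)%N /\ (v <= h p.+1)%N).
Proof.
move=> mono lp ep lrm erm lrp erp.
have rmp : (rm < p)%N.
  rewrite ltnNge; apply/negP => H; have := mono _ _ H lrm; lia.
have prp : (p < rp)%N.
  rewrite ltnNge; apply/negP => H; have := mono _ _ H lp; lia.
have h1 := mono rm p.-1 ltac:(lia) ltac:(lia).
have h2 := mono p.-1 p ltac:(lia) ltac:(lia).
have h3 := mono p p.+1 ltac:(lia) ltac:(lia).
have h4 := mono p.+1 rp ltac:(lia) ltac:(lia).
split; split; try split; try split; lia.
Qed.

Lemma ratcontra (d d2 a : nat) : (0 < d)%N -> (d <= d2)%N -> (a <= 1)%N ->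
  ~ ((2 / d%:R <= a%:R / d2%:R :> rat)%R).
Proof.
move=> d0 dd2 a1.
have d0' : (0 < d%:R :> rat)%R by rewrite ltr0n.
have d20' : (0 < d2%:R :> rat)%R by rewrite ltr0n; lia.
rewrite ler_pdivrMr // mulrAC ler_pdivlMr // -!natrM ler_nat.
nia.
Qed.

Theorem lemma4 (n N : nat) (P Q : seq (bitstr n))
  (s : 'I_2 -> {perm 'I_(size (P ++ Q))}) (v1 v2 : nat) :
  size P = N -> size Q = N ->
  sorting s ->
  (v1min (P ++ Q) < v1max (P ++ Q))%N ->
  inVplus (P ++ Q) v1 v2 -> inVminus (P ++ Q) v1 v2 ->
  (#|[set k : 'I_(size (P ++ Q)) |
        ((f1 (ind (P ++ Q) k) == v1) && (f2 (ind (P ++ Q) k) == v2))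
        && ge_ext (cDis s k)
             (2 / ((v1max (P ++ Q))%:R - (v1min (P ++ Q))%:R) : rat)%R]| <= 2)%N.
Proof.
move=> _ _ so Hlt [[x0 x0R _] [yp ypR [yp1 yp2]]] [_ [ym ymR [ym1 ym2]]].
move: s so Hlt x0R ypR ymR.
move: (P ++ Q) => R s so Hlt x0R ypR ymR.
have mono0 := @hv_mono _ _ s ord0 so.
have mono1 := @hv_mono _ _ s ord_max so.
have Rn0 : R != [::] by case: R s so Hlt x0R {mono0 mono1 ypR ymR}.
have [xmn xmnR Hxmn] := xmin Rn0.
have [xmx xmxR Hxmx] := xmax Rn0.
have [rp0 lrp0 erp0] := exists_pos s ord0 ypR.
have [rm0 lrm0 erm0] := exists_pos s ord0 ymR.
have [rp1 lrp1 erp1] := exists_pos s ord_max ymR.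
have [rm1 lrm1 erm1] := exists_pos s ord_max ypR.
have [r1 lr1 er1] := exists_pos s ord_max xmnR.
have [r2 lr2 er2] := exists_pos s ord_max xmxR.
have oxmn := ones_le xmn. have oxmx := ones_le xmx.
rewrite /f1 /f2 /fobj /= in yp1 yp2 ym1 ym2 Hxmn Hxmx erp0 erm0 erp1 erm1 er1 er2.
set S := [set k | _].
pose pos0 (k : 'I_(size R)) := val ((s ord0)^-1 k)%g.
have key : forall k, k \in S ->
   [/\ (pos0 k < size R)%N, hv s ord0 (pos0 k) = v1 &
       (hv s ord0 (pos0 k).-1 < v1)%N || (v1 < hv s ord0 (pos0 k).+1)%N].
  move=> k; rewrite inE => /andP[/andP[/eqP hk1 /eqP hk2] hge].
  have ep : hv s ord0 (pos0 k) = v1 by rewrite /pos0 hv_pos.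
  split => //; first exact: ltn_ord.
  have lpk : (pos0 k < size R)%N by apply: ltn_ord.
  have t1 : (hv s ord0 rm0).+1 = v1 by lia.
  have t2 : hv s ord0 rp0 = v1.+1 by lia.
  have [[p0 pm] [pa [pb [pc pd]]]] := @interior (hv s ord0 ) (size R) v1 _ rm0 rp0 mono0 lpk ep lrm0 t1 lrp0 t2.
  apply: contraT; rewrite negb_or -!leqNgt => /andP[A B].
  exfalso.
  set p := pos0 k in ep p0 pm pa pb pc pd A B.
  set q := val ((s ord_max)^-1 k)%g.
  have eq : hv s ord_max q = v2 by rewrite /q hv_pos.
  have lqk : (q < size R)%N by apply: ltn_ord.
  have t3 : (hv s ord_max rm1).+1 = v2 by lia.
  have t4 : hv s ord_max rp1 = v2.+1 by lia.
  have [[q0 qm] [qa [qb [qc qd]]]] := @interior (hv s ord_max ) (size R) v2 _ rm1 rp1 mono1 lqk eq lrm1 t3 lrp1 t4.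
  have lp1 : (p.+1 < size R)%N by lia.
  pose k' := s ord0 (Ordinal lp1).
  have ek' : hv s ord0 p.+1 = fobj ord0 (ind R k') by rewrite (hv_ord s ord0 (Ordinal lp1)).
  have ok' := ones_le (ind R k'). have ok := ones_le (ind R k).
  rewrite /f1 /f2 /fobj /= in hk1 hk2 ek'.
  set q' := val ((s ord_max)^-1 k')%g.
  have eq' : hv s ord_max q' = v2 by rewrite /q' hv_pos /fobj /=; lia.
  have qq' : q != q'.
    apply/negP => /eqP /val_inj /perm_inj kk'.
    have : ((s ord0)^-1 k = (s ord0)^-1 k')%g by rewrite kk'.
    rewrite /k' permK => /(congr1 val) /=; rewrite -/(pos0 k) -/p; lia.
  have diff : (hv s ord_max q.+1 <= (hv s ord_max q.-1).+1)%N.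
    case: (ltngtP q q') qq' => // H _.
    - have := mono1 _ _ H (ltn_ord _).
      have u : (q.+1 < size R)%N.
        lia.
      have := mono1 q q.+1 (leqnSn _) u.
      lia.
    - have := mono1 q' q.-1 ltac:(lia) ltac:(lia); have := mono1 q.-1 q ltac:(lia) ltac:(lia); lia.
  have hm1 := mono1 r1 (size R).-1 ltac:(lia) ltac:(lia).
  have h01 := mono1 0 r2 ltac:(lia) ltac:(lia).
  move: hge; rewrite /cDis /cdis_part -/(pos0 k) -/p -/q.
  have -> : (p == 0%N) || (p == (size R).-1) = false by apply/negbTE; lia.
  have -> : (q == 0%N) || (q == (size R).-1) = false by apply/negbTE; lia.
  rewrite /= !sval_hv.
  have -> : hv s ord0 p.+1 = v1 by lia.
  have -> : hv s ord0 p.-1 = v1 by lia.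
  rewrite subrr mul0r add0r -!natrB; try lia.
  move=> H; exfalso; apply: (ratcontra _ _ _ H); lia.
clearbody S.
set SA := [set k in S | (hv s ord0 (pos0 k).-1 < v1)%N].
set SB := [set k in S | (v1 < hv s ord0 (pos0 k).+1)%N].
have sub : S \subset SA :|: SB.
  apply/subsetP => k kS; have [_ _] := key k kS.
  by rewrite !inE kS.
have cA : (#|SA| <= 1)%N.
  apply/card_le1_eqP => x y; rewrite !inE => /andP[xS xa] /andP[yS ya].
  have [lx ex _] := key x xS; have [ly ey _] := key y yS.
  have := uniqA mono0 lx ly ex ey xa ya.
  by rewrite /pos0 => /val_inj /perm_inj.
have cB : (#|SB| <= 1)%N.
  apply/card_le1_eqP => x y; rewrite !inE => /andP[xS xa] /andP[yS ya].
  have [lx ex _] := key x xS; have [ly ey _] := key y yS.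
  have := uniqB mono0 lx ly ex ey xa ya.
  by rewrite /pos0 => /val_inj /perm_inj.
have := subset_leq_card sub; rewrite cardsU; lia.
Qed.
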